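(* For points $P=(x,y)$, $Q=(x',y')$ in $\mathbb{R}^2$ with $xx'+yy'\leq 1$ define $\delta(P,Q)=\sqrt{2-2xx'-2yy'}$. Let $A_1=(0,-1)$ and let $B_1=(x_1,y_1)$, $C_1=(x_2,y_2)$, $D_1=(x_3,y_3)\in[-1,1]\times[-1,1]$ satisfy: (i) $x_1^2+y_1^2=1$, $|x_1-1|\leq 1/25$, $|y_1|\leq 7/25$; (ii) $x_2^2+y_2^2=1$, $|x_2+1|\leq 1/25$, $|y_2|\leq 7/25$; (iii) $|x_3|\leq 7/25$, $|y_3-1|\leq 1/25$; (iv) the triangle $A_1B_1C_1$ contains $O=(0,0)$ in its interior or on its edges. Then $$\delta(A_1,B_1)+\delta(B_1,C_1)+\delta(C_1,A_1)+\delta(A_1,D_1)+\delta(B_1,D_1)+\delta(C_1,D_1)\leq 4+4\sqrt{2},$$ and equality holds if and only if $B_1=(1,0)$, $C_1=(-1,0)$, $D_1=(0,1)$. *)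

(* Defs.v *)
From Stdlib Require Export Reals.
Open Scope R_scope.

(* delta(P,Q) = sqrt(2 - 2 x x' - 2 y y'); the paper uses it only when
   x x' + y y' <= 1 (Stdlib's sqrt is total, returning 0 on negatives). *)
Definition delta (P Q : R * R) : R :=
  sqrt (2 - 2 * fst P * fst Q - 2 * snd P * snd Q).

Definition origin_in_triangle (A B C : R * R) : Prop :=
  exists a b c : R, 0 <= a /\ 0 <= b /\ 0 <= c /\ a + b + c = 1 /\
    a * fst A + b * fst B + c * fst C = 0 /\
    a * snd A + b * snd B + c * snd C = 0.

(* Main.v *)
Require Import Defs.
From Stdlib Require Import Reals Lra Psatz.
Open Scope R_scope.

Lemma sqrt_le_of_sq a b : 0 <= b -> a <= b * b -> sqrt a <= b.
Proof.
  intros Hb H. rewrite <- (sqrt_square b Hb). apply sqrt_le_1_alt. exact H.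
Qed.

Lemma rabs_bnd x a : Rabs x <= a -> -a <= x <= a.
Proof. unfold Rabs; destruct (Rcase_abs x); lra. Qed.

Lemma s2_bounds : 1.414 <= sqrt 2 <= 1.415 /\ sqrt 2 * sqrt 2 = 2.
Proof.
  assert (H := sqrt_sqrt 2 ltac:(lra)). assert (H0 := sqrt_pos 2).
  split; [split|exact H]; nra.
Qed.

Lemma sq_bound a y k : a = 2 + 2 * y -> 0 <= k <= 1/10 ->
  -3/5 <= y <= 3/5 -> (1/4 - 2*k) - k * y + k*k*y*y >= 0 ->
  sqrt a <= sqrt 2 * (1 + y/2 - k * y^2).
Proof.
  intros Ha Hk Hy Hc. destruct s2_bounds as [[s1 s2] ss].
  assert (HR : 0 <= 1 + y/2 - k*y^2) by nra.
  apply sqrt_le_of_sq. nra.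
  replace (sqrt 2 * (1 + y / 2 - k * y ^ 2) * (sqrt 2 * (1 + y / 2 - k * y ^ 2)))
    with ((sqrt 2 * sqrt 2) * ((1 + y / 2 - k * y ^ 2) * (1 + y / 2 - k * y ^ 2))) by ring.
  rewrite ss. subst a.
  assert (HE : 2 * ((1 + y / 2 - k * y ^ 2) * (1 + y / 2 - k * y ^ 2)) - (2 + 2*y)
     = 2 * (y*y) * ((1/4 - 2*k) - k * y + k*k*y*y)) by field.
  assert (0 <= 2 * (y*y) * ((1/4 - 2*k) - k * y + k*k*y*y)).
  { apply Rmult_le_pos. nra. lra. }
  lra.
Qed.

Lemma sq4_bound a d : a = 4 - d -> 0 <= d -> d <= 4 -> sqrt a <= 2 - d/4.
Proof. intros -> H1 H2. apply sqrt_le_of_sq; nra. Qed.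

Theorem theorem3 (x1 y1 x2 y2 x3 y3 : R) :
  -1 <= x1 <= 1 -> -1 <= y1 <= 1 ->
  -1 <= x2 <= 1 -> -1 <= y2 <= 1 ->
  -1 <= x3 <= 1 -> -1 <= y3 <= 1 ->
  x1 ^ 2 + y1 ^ 2 = 1 -> Rabs (x1 - 1) <= 1 / 25 -> Rabs y1 <= 7 / 25 ->
  x2 ^ 2 + y2 ^ 2 = 1 -> Rabs (x2 + 1) <= 1 / 25 -> Rabs y2 <= 7 / 25 ->
  Rabs x3 <= 7 / 25 -> Rabs (y3 - 1) <= 1 / 25 ->
  origin_in_triangle (0, -1) (x1, y1) (x2, y2) ->
  let A1 := (0, -1) in let B1 := (x1, y1) in
  let C1 := (x2, y2) in let D1 := (x3, y3) in
  let S := delta A1 B1 + delta B1 C1 + delta C1 A1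
           + delta A1 D1 + delta B1 D1 + delta C1 D1 in
  S <= 4 + 4 * sqrt 2 /\
  (S = 4 + 4 * sqrt 2 <->
     (B1 = (1, 0) /\ C1 = (-1, 0) /\ D1 = (0, 1))).
Proof.
  intros hx1 hy1 hx2 hy2 hx3 hy3 c1 a1 b1 c2 a2 b2 a3 b3 _ A1 B1 C1 D1 S.
  apply rabs_bnd in a1, b1, a2, b2, a3, b3.
  destruct s2_bounds as [[s1 s2] ss].
  set (yB := -(x1*x3 + y1*y3)). set (yC := -(x2*x3 + y2*y3)).
  assert (HAB : delta A1 B1 <= sqrt 2 * (1 + y1/2 - 1/10 * y1^2)).
  { unfold delta; simpl; apply sq_bound; [ring | lra | lra | nra]. }
  assert (HAC : delta C1 A1 <= sqrt 2 * (1 + y2/2 - 1/10 * y2^2)).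
  { unfold delta; simpl; apply sq_bound; [ring | lra | lra | nra]. }
  assert (HBD : delta B1 D1 <= sqrt 2 * (1 + yB/2 - 8/100 * yB^2)).
  { assert (-3/5 <= yB <= 3/5) by (unfold yB; split; nra).
    unfold delta; simpl; apply sq_bound; [unfold yB; ring | lra | lra | nra]. }
  assert (HCD : delta C1 D1 <= sqrt 2 * (1 + yC/2 - 8/100 * yC^2)).
  { assert (-3/5 <= yC <= 3/5) by (unfold yC; split; nra).
    unfold delta; simpl; apply sq_bound; [unfold yC; ring | lra | lra | nra]. }
  assert (HBC : delta B1 C1 <= 2 - (2 + 2*x1*x2 + 2*y1*y2)/4).
  { unfold delta; simpl; apply sq4_bound; [ring | | ].
    - pose proof (Rle_0_sqr (x1+x2)); pose proof (Rle_0_sqr (y1+y2)); unfold Rsqr in *; nra.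
    - pose proof (Rle_0_sqr (x1-x2)); pose proof (Rle_0_sqr (y1-y2)); unfold Rsqr in *; nra. }
  assert (HAD : delta A1 D1 <= 2 - (2 - 2*y3)/4).
  { unfold delta; simpl; apply sq4_bound; [ring | nra | nra]. }
  set (e := 1 - y3).
  assert (Hm : -(x1+x2)*x3 <= 7/25 * (25/48) * (y1^2 + y2^2)).
  { destruct (Rle_lt_dec 0 (x1+x2)).
    - assert ((x1+x2)*(48/25) <= (x1+x2)*(x1-x2)) by nra. nra.
    - assert (-(x1+x2)*(48/25) <= -(x1+x2)*(x1-x2)) by nra. nra. }
  assert (Hp : 0 <= 1 + x1*x2 + y1*y2).
  { pose proof (Rle_0_sqr (x1+x2)); pose proof (Rle_0_sqr (y1+y2)); unfold Rsqr in *; nra. }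
  assert (Q : (y1+y2)*e/2 - (x1+x2)*x3/2 - 1/10*(y1^2+y2^2) - 8/100*(yB^2+yC^2)
              <= 28/100 * e - 27/1000 * (y1^2+y2^2) - 8/100*(yB^2+yC^2)).
  { unfold e. nra. }
  assert (Hsum : S <= 4 + 4 * sqrt 2 - 1/1000 * (e + y1^2 + y2^2 + yB^2 + yC^2)).
  { assert (HE : sqrt 2 * (1 + y1/2 - 1/10 * y1^2) + sqrt 2 * (1 + y2/2 - 1/10 * y2^2)
       + sqrt 2 * (1 + yB/2 - 8/100 * yB^2) + sqrt 2 * (1 + yC/2 - 8/100 * yC^2)
       = sqrt 2 * (4 + ((y1+y2)*e/2 - (x1+x2)*x3/2 - 1/10*(y1^2+y2^2) - 8/100*(yB^2+yC^2)))).
    { unfold e, yB, yC. field. }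
    assert (F : sqrt 2 * ((y1+y2)*e/2 - (x1+x2)*x3/2 - 1/10*(y1^2+y2^2) - 8/100*(yB^2+yC^2))
       <= sqrt 2 * (28/100 * e - 27/1000 * (y1^2+y2^2) - 8/100*(yB^2+yC^2))).
    { apply Rmult_le_compat_l; lra. }
    assert (0 <= e) by (unfold e; lra).
    assert (0 <= y1^2+y2^2) by nra. assert (0 <= yB^2+yC^2) by nra.
    assert (sqrt 2 * (28/100 * e - 27/1000 * (y1^2+y2^2) - 8/100*(yB^2+yC^2))
       <= 1415/1000*28/100*e - 1414/1000*27/1000*(y1^2+y2^2) - 1414/1000*8/100*(yB^2+yC^2)) by nra.
    unfold S. unfold e in *. lra. }
  assert (0 <= e) by (unfold e; lra).
  assert (0 <= y1^2) by nra. assert (0 <= y2^2) by nra.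
  assert (0 <= yB^2) by nra. assert (0 <= yC^2) by nra.
  split. { lra. }
  split.
  - intro Heq.
    assert (e = 0) by lra. assert (y1^2 = 0) by lra. assert (y2^2 = 0) by lra.
    assert (yB^2 = 0) by lra.
    assert (y1 = 0) by nra. assert (y2 = 0) by nra. assert (yB = 0) by nra.
    assert (x1 = 1) by nra. assert (x2 = -1) by nra.
    assert (y3 = 1) by (unfold e in *; lra).
    assert (x3 = 0) by (unfold yB in *; subst; nra).
    unfold B1, C1, D1. subst. repeat split.
  - intros [HB [HC HD]]. unfold B1, C1, D1 in *.
    injection HB as -> ->. injection HC as -> ->. injection HD as -> ->.
    unfold S, A1, delta; simpl.
    replace (2 - 2 * 0 * 1 - 2 * -1 * 0) with 2 by ring.
    replace (2 - 2 * 1 * -1 - 2 * 0 * 0) with (2*2) by ring.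
    replace (2 - 2 * -1 * 0 - 2 * 0 * -1) with 2 by ring.
    replace (2 - 2 * 0 * 0 - 2 * -1 * 1) with (2*2) by ring.
    replace (2 - 2 * 1 * 0 - 2 * 0 * 1) with 2 by ring.
    replace (2 - 2 * -1 * 0 - 2 * 0 * 1) with 2 by ring.
    rewrite sqrt_square by lra. ring.
Qed.
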